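(* Let $\mathcal{G}=(\mathcal{V},\mathcal{E})$ be a finite graph and $x\in(0,\infty)^{\mathcal{V}}$ with $$\min_{\mathcal{G}'\subseteq\mathcal{G}}\mathfrak{K}_{\mathcal{G}'}(x|_{\mathcal{G}'})=0,$$ where $\mathcal{G}'$ runs over all induced subgraphs of $\mathcal{G}$. Let $\mathcal{G}_0=(\mathcal{V}_0,\mathcal{E}_0)$ be a minimal (with respect to inclusion) induced subgraph of $\mathcal{G}$ such that $\mathfrak{K}_{\mathcal{G}_0}(x|_{\mathcal{G}_0})=0$. Then $\mathcal{G}$ decomposes as the graph join of $\mathcal{G}_0$ with the complementary induced subgraph $\mathcal{G}_1$ on $\mathcal{V}\setminus\mathcal{V}_0$; i.e. every vertex of $\mathcal{V}\setminus\mathcal{V}_0$ is adjacent to every vertex of $\mathcal{V}_0$.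
   Context: Graphs are finite, simple, undirected. A clique is a set of pairwise adjacent vertices (the empty set is a clique). An induced subgraph $\mathcal{G}'$ has vertex set $\mathcal{V}'\subseteq\mathcal{V}$ and all edges of $\mathcal{G}$ between vertices of $\mathcal{V}'$; $x|_{\mathcal{G}'}=(x_v)_{v\in\mathcal{V}'}$. $\mathfrak{K}_{\mathcal{G}}(x)=\sum_{\mathcal{K}\subseteq\mathcal{V}\text{ clique}}(-1)^{|\mathcal{K}|}\prod_{v\in\mathcal{K}}x_v$, the empty clique contributing $1$. The graph join of graphs with disjoint vertex sets $\mathcal{V}_0,\mathcal{V}_1$ has vertex set $\mathcal{V}_0\sqcup\mathcal{V}_1$, two vertices adjacent iff adjacent within the same piece or lying in different pieces. *)

(* Defs.v *)
From mathcomp Require Import all_boot all_order all_algebra.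
Set Implicit Arguments. Unset Strict Implicit. Unset Printing Implicit Defensive.
Import Order.TTheory GRing.Theory Num.Theory.
Local Open Scope ring_scope.

Definition simple_graph (T : finType) (e : rel T) : Prop :=
  symmetric e /\ irreflexive e.

Definition is_clique (T : finType) (e : rel T) (K : {set T}) : bool :=
  [forall u in K, forall v in K, (u != v) ==> e u v].

(* Clique polynomial of the induced subgraph on vertex set A, evaluated at x|_A:
   sum over cliques K contained in A of (-1)^|K| prod_{v in K} x_v. *)
Definition clique_poly (R : ringType) (T : finType) (e : rel T) (A : {set T})
    (x : T -> R) : R :=
  \sum_(K : {set T} | (K \subset A) && is_clique e K)
     (-1) ^+ #|K| * \prod_(v in K) x v.

(* Main.v *)
Require Import Defs.
From mathcomp Require Import all_boot all_order all_algebra.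
From mathcomp Require Import ring.
Import Order.TTheory GRing.Theory Num.Theory.
Local Open Scope ring_scope.

Lemma cliqueP (T : finType) (e : rel T) (K : {set T}) :
  reflect (forall a b, a \in K -> b \in K -> a != b -> e a b) (is_clique e K).
Proof.
apply: (iffP forallP) => H.
  move=> a b aK bK ab; have /implyP/(_ aK)/forallP/(_ b)/implyP/(_ bK)/implyP := H a.
  by apply.
move=> a; apply/implyP=> aK; apply/forallP=> b; apply/implyP=> bK; apply/implyP.
exact: H.
Qed.

Lemma clique_U1 (T : finType) (e : rel T) (u : T) (K : {set T}) :
  symmetric e -> u \notin K ->
  is_clique e (u |: K) = is_clique e K && [forall w in K, e u w].
Proof.
move=> hs uK; apply/idP/idP.
- move=> /cliqueP Hc; apply/andP; split.
  + by apply/cliqueP=> a b aK bK; apply: Hc; rewrite setU1r.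
  + apply/forallP=> w; apply/implyP=> wK; apply: Hc; rewrite ?setU11 ?setU1r //.
    by apply/eqP=> E; rewrite E wK in uK.
- case/andP=> /cliqueP Hc /forallP Hu.
  apply/cliqueP=> a b; rewrite !in_setU1 => /orP[/eqP->|aK] /orP[/eqP->|bK].
  + by rewrite eqxx.
  + by move=> _; have /implyP := Hu b; apply.
  + by move=> _; rewrite hs; have /implyP := Hu a; apply.
  + exact: Hc.
Qed.

Lemma clique_rec (R : comRingType) (T : finType) (e : rel T) (A : {set T})
  (u : T) (x : T -> R) : symmetric e -> u \notin A ->
  clique_poly e (u |: A) x =
  clique_poly e A x - x u * clique_poly e (A :&: [set w | e u w]) x.
Proof.
move=> hs uA; rewrite /clique_poly (bigID (fun K : {set T} => u \in K)) /= addrC.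
congr (_ + _).
  apply: eq_bigl => K; rewrite andbAC; congr (_ && _).
  apply/idP/idP.
  - case/andP=> /subsetP sK uK; apply/subsetP=> w wK.
    have := sK w wK; rewrite in_setU1 => /orP[/eqP E|//].
    by rewrite -E wK in uK.
  - move=> /subsetP sK; have -> : u \notin K by apply/negP=> /sK; rewrite (negbTE uA).
    rewrite andbT.
    by apply/subsetP=> w /sK; apply: setU1r.
rewrite (reindex_onto (fun K => u |: K) (fun K => K :\ u)); last first.
  by move=> K /andP[_ uK]; rewrite setD1K.
rewrite mulr_sumr -sumrN.
apply: eq_big => K.
  rewrite setU11 andbT.
  apply/idP/idP.
  - case/andP=> /andP[sK cK] /eqP E.
    have uK : u \notin K by rewrite -E setD11.
    rewrite clique_U1 // in cK; case/andP: cK => cK /forallP Hu.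
    rewrite cK andbT; apply/subsetP=> w wK; rewrite in_setI inE.
    have /implyP := Hu w; move/(_ wK) => ->; rewrite andbT.
    have /subsetP := sK; move/(_ w); rewrite setU1r // => /(_ isT).
    rewrite in_setU1 => /orP[/eqP E'|//]; by rewrite -E' wK in uK.
  - case/andP=> /subsetP sK cK.
    have uK : u \notin K by apply/negP=> /sK; rewrite in_setI (negbTE uA).
    rewrite setU1K // eqxx andbT clique_U1 // cK /=.
    apply/andP; split.
      apply/subsetP=> w; rewrite !in_setU1 => /orP[->//|/sK]; rewrite in_setI.
      by case/andP=> ->; rewrite orbT.
    by apply/forallP=> w; apply/implyP=> /sK; rewrite in_setI inE => /andP[].
move=> /andP[_ /eqP E].
have uK : u \notin K by rewrite -E setD11.
rewrite cardsU1 uK big_setU1 //= add1n exprS.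
ring.
Qed.

Theorem lemma4p5 (R : realFieldType) (T : finType) (e : rel T)
  (x : T -> R) (V0 : {set T}) :
  simple_graph e ->
  (forall v, 0 < x v) ->
  (* min over induced subgraphs of the clique polynomial equals 0 *)
  (forall A : {set T}, 0 <= clique_poly e A x) ->
  (exists A : {set T}, clique_poly e A x = 0) ->
  (* G0 = induced subgraph on V0 is inclusion-minimal with vanishing clique polynomial *)
  clique_poly e V0 x = 0 ->
  (forall B : {set T}, B \proper V0 -> clique_poly e B x != 0) ->
  forall u v, u \notin V0 -> v \in V0 -> e u v.
Proof.
move=> [hs _] xpos nonneg _ K0 minV u v uV vV.
apply/negPn/negP => nuv.
set N := V0 :&: [set w | e u w].
have pN : N \proper V0.
  rewrite properEneq subsetIl andbT; apply/eqP=> E.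
  by move: vV; rewrite -E in_setI inE (negbTE nuv) andbF.
have KN : 0 < clique_poly e N x by rewrite lt_def minV // nonneg.
have := nonneg (u |: V0); rewrite clique_rec // K0 sub0r oppr_ge0.
by move=> H; have := mulr_gt0 (xpos u) KN; rewrite ltNge H.
Qed.
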